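(* Let $R$ be a discrete valuation ring with field of fractions $K$ and uniformizer $\pi$, $V$ a finite-dimensional $K$-vector space, and $L,M$ lattices of $V$. Then $\pi\cdot m_+(L,M)\subset m_-(L,M)$.
   Context: A lattice of $V$ is a free $R$-submodule $L$ with $K\otimes_R L\to V$ an isomorphism. $m_-(L,M)=\sum_{n\in\mathbb Z}(\pi^nL\cap\pi^{-n}M)$ (the $R$-submodule generated by these) and $m_+(L,M)=\bigcap_{n\in\mathbb Z}(\pi^nL+\pi^{-n}M)$. *)

(* Defs.v *)
From HB Require Import structures.
From mathcomp Require Import all_boot all_order all_algebra.
Set Implicit Arguments. Unset Strict Implicit. Unset Printing Implicit Defensive.
Import Order.TTheory GRing.Theory Num.Theory.
Local Open Scope ring_scope.

(* A discrete valuation on the field K: a surjective group homomorphism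
   K^* -> Z satisfying the ultrametric inequality (the value at 0 is
   irrelevant; 0 is treated as having valuation +oo). *)
Definition is_discrete_valuation (K : fieldType) (v : K -> int) : Prop :=
  [/\ (forall x y : K, x != 0 -> y != 0 -> v (x * y) = v x + v y),
      (forall x y : K, x != 0 -> y != 0 -> x + y != 0 ->
          Order.min (v x) (v y) <= v (x + y)) &
      (forall n : int, exists2 x : K, x != 0 & v x = n)].

(* The valuation ring R = {x in K | v x >= 0} u {0}: a DVR whose field of
   fractions is K. *)
Definition valring (K : fieldType) (v : K -> int) : pred K :=
  fun x => (x == 0) || (0 <= v x).

Definition uniformizer (K : fieldType) (v : K -> int) (pi : K) : Prop :=
  pi != 0 /\ v pi = 1.

(* L is a lattice: a free R-submodule of V with K (x)_R L -> V an
   isomorphism, i.e. L is the R-span of some K-basis of V. *)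
Definition is_lattice (K : fieldType) (V : vectType K) (v : K -> int)
    (L : V -> Prop) : Prop :=
  exists b : (\dim (fullv : {vspace V})).-tuple V,
    basis_of fullv b /\
    (forall x : V, L x <->
       exists c : 'I_(\dim (fullv : {vspace V})) -> K,
         (forall i, c i \in valring v) /\ x = \sum_i c i *: b`_i).

Definition scale_set (K : fieldType) (V : lmodType K) (a : K) (L : V -> Prop)
  : V -> Prop := fun x => exists2 y, L y & x = a *: y.

Definition sum_set (K : fieldType) (V : lmodType K) (A B : V -> Prop)
  : V -> Prop := fun x => exists y z, [/\ A y, B z & x = y + z].

Definition is_Rsubmodule (K : fieldType) (V : lmodType K) (v : K -> int)
    (P : V -> Prop) : Prop :=
  [/\ P 0, (forall x y, P x -> P y -> P (x + y)) &
      (forall a x, a \in valring v -> P x -> P (a *: x))].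

Definition Rspan (K : fieldType) (V : lmodType K) (v : K -> int)
    (S : V -> Prop) : V -> Prop :=
  fun x => forall P : V -> Prop, is_Rsubmodule v P ->
    (forall y, S y -> P y) -> P x.

Definition m_minus (K : fieldType) (V : lmodType K) (v : K -> int) (pi : K)
    (L M : V -> Prop) : V -> Prop :=
  Rspan v (fun x => exists n : int,
                      scale_set (pi ^ n) L x /\ scale_set (pi ^ (- n)) M x).

Definition m_plus (K : fieldType) (V : lmodType K) (pi : K)
    (L M : V -> Prop) : V -> Prop :=
  fun x => forall n : int,
    sum_set (scale_set (pi ^ n) L) (scale_set (pi ^ (- n)) M) x.

(* Main.v *)
Require Import Defs.
From HB Require Import structures.
From mathcomp Require Import all_boot all_order all_algebra.
From mathcomp Require Import zify.
Import Order.TTheory GRing.Theory Num.Theory.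
Local Open Scope ring_scope.
Set Implicit Arguments.

Lemma vrP (K : fieldType) (v : K -> int) (x : K) :
  (x \in valring v) = (x == 0) || (0 <= v x).
Proof. by []. Qed.

Lemma v1 (K : fieldType) (v : K -> int) : is_discrete_valuation v -> v 1 = 0.
Proof.
case=> hm _ _. have := hm 1 1 (oner_neq0 _) (oner_neq0 _). rewrite mulr1. lia.
Qed.

Lemma vr_N1 (K : fieldType) (v : K -> int) :
  is_discrete_valuation v -> (-1 : K) \in valring v.
Proof.
move=> hv; have h1 := v1 hv; case: hv => hm _ _.
have := hm (-1) (-1) (_ : (-1 : K) != 0) (_ : (-1 : K) != 0).
rewrite ?oppr_eq0 ?oner_eq0 // mulrNN mulr1 h1 => e. rewrite vrP; apply/orP; right. lia.
Qed.

Lemma vr_add (K : fieldType) (v : K -> int) (hv : is_discrete_valuation v) (x y : K) :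
  x \in valring v -> y \in valring v -> x + y \in valring v.
Proof.
case: hv => _ hu _. rewrite !vrP.
have [->|x0] := eqVneq x 0; first by move=> *; rewrite add0r.
have [->|y0] := eqVneq y 0; first by move=> h _; rewrite addr0 (negbTE x0).
have [s|s0] := eqVneq (x+y) 0; first by move=> *; rewrite ?orTb ?eqxx.
move=> /= hx hy; apply: le_trans (hu x y x0 y0 s0). by rewrite le_min hx hy.
Qed.

Lemma vr_mul (K : fieldType) (v : K -> int) (hv : is_discrete_valuation v) (x y : K) :
  x \in valring v -> y \in valring v -> x * y \in valring v.
Proof.
case: hv => hm _ _. rewrite !vrP.
have [->|x0] := eqVneq x 0; first by rewrite mul0r eqxx.
have [->|y0] := eqVneq y 0; first by rewrite mulr0 eqxx.
move=> /= hx hy; rewrite mulf_eq0 (negbTE x0) (negbTE y0) /= hm //. lia.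
Qed.

Lemma vpow (K : fieldType) (v : K -> int) (hv : is_discrete_valuation v) (pi : K)
  (hpi : uniformizer v pi) (n : nat) : v (pi ^+ n) = n.
Proof.
case: hpi => pi0 h1; have h0 := v1 hv; case: hv => hm _ _.
elim: n => [|n IH]; first by rewrite expr0 h0.
rewrite exprS hm ?expf_neq0 // h1 IH. lia.
Qed.

Lemma vr_pow (K : fieldType) (v : K -> int) (hv : is_discrete_valuation v) (pi : K)
  (hpi : uniformizer v pi) (n : nat) : pi ^+ n \in valring v.
Proof. rewrite vrP (vpow hv hpi); apply/orP; right. lia. Qed.

Lemma vr_powz (K : fieldType) (v : K -> int) (hv : is_discrete_valuation v) (pi : K)
  (hpi : uniformizer v pi) (d : int) : 0 <= d -> pi ^ d \in valring v.
Proof. case: d => n // _. exact: vr_pow. Qed.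

Lemma lat_sub (K : fieldType) (V : vectType K) (v : K -> int)
  (hv : is_discrete_valuation v) (L : V -> Prop) :
  is_lattice v L -> is_Rsubmodule v L.
Proof.
case=> b [hb hL]. split.
- apply/hL; exists (fun=> 0); split=> [i|]; first by rewrite vrP eqxx.
  by rewrite big1 // => i _; rewrite scale0r.
- move=> x y /hL [c [hc ->]] /hL [d [hd ->]]; apply/hL.
  exists (fun i => c i + d i); split=> [i|]; first exact: vr_add.
  by rewrite -big_split /=; apply: eq_bigr => i _; rewrite scalerDl.
- move=> a x ha /hL [c [hc ->]]; apply/hL.
  exists (fun i => a * c i); split=> [i|]; first exact: vr_mul.
  by rewrite scaler_sumr; apply: eq_bigr => i _; rewrite scalerA.
Qed.

Lemma lat_abs (K : fieldType) (V : vectType K) (v : K -> int)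
  (hv : is_discrete_valuation v) (pi : K) (hpi : uniformizer v pi) (L : V -> Prop) :
  is_lattice v L -> forall x, exists n : nat, L (pi ^+ n *: x).
Proof.
have hm : forall x y : K, x != 0 -> y != 0 -> v (x * y) = v x + v y by case: hv.
have pi0 : pi != 0 by case: hpi.
case=> b [hb hL] x.
have ex := coord_basis hb (memvf x).
set c := fun i => coord b i x.
have ex' : x = \sum_i c i *: b`_i by exact: ex.
set N := (\sum_i `|v (c i)|)%N.
exists N. apply/hL.
exists (fun i => pi ^+ N * c i); split.
- move=> i. rewrite vrP. have [->|ci0] := eqVneq (c i) 0; first by rewrite mulr0 eqxx.
  apply/orP; right. rewrite hm ?expf_neq0 // (vpow hv hpi).
  have : (`|v (c i)| <= N)%N by rewrite /N (bigD1 i) //= leq_addr.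
  lia.
- rewrite {1}ex' scaler_sumr; apply: eq_bigr => i _; by rewrite scalerA.
Qed.


Lemma ss_add (K : fieldType) (V : lmodType K) (v : K -> int) (P : V -> Prop)
  (hP : is_Rsubmodule v P) (a : K) (x y : V) :
  scale_set a P x -> scale_set a P y -> scale_set a P (x + y).
Proof.
case: hP => _ hD _. case=> x' hx ->; case=> y' hy ->.
by exists (x' + y'); [apply: hD | rewrite scalerDr].
Qed.

Lemma ss_opp (K : fieldType) (V : lmodType K) (v : K -> int) (P : V -> Prop)
  (hP : is_Rsubmodule v P) (hN1 : (-1 : K) \in valring v) (a : K) (x : V) :
  scale_set a P x -> scale_set a P (- x).
Proof.
case: hP => _ _ hZ. case=> x' hx ->.
exists (- x'); last by rewrite scalerN.
by rewrite -scaleN1r; apply: hZ.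
Qed.

Lemma ss0 (K : fieldType) (V : lmodType K) (v : K -> int) (P : V -> Prop)
  (hP : is_Rsubmodule v P) (a : K) : scale_set a P 0.
Proof. case: hP => h0 _ _. by exists 0; rewrite ?scaler0. Qed.

Lemma ss_mono (K : fieldType) (V : lmodType K) (v : K -> int)
  (hv : is_discrete_valuation v) (pi : K) (hpi : uniformizer v pi)
  (P : V -> Prop) (hP : is_Rsubmodule v P) (i j : int) (x : V) :
  i <= j -> scale_set (pi ^ j) P x -> scale_set (pi ^ i) P x.
Proof.
have pi0 : pi != 0 by case: hpi.
case: hP => _ _ hZ => hij. case=> y hy ->.
exists (pi ^ (j - i) *: y).
  by apply: hZ => //; apply: vr_powz => //; rewrite subr_ge0.
by rewrite scalerA -expfzDr // addrC subrK.
Qed.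

Lemma ss_pi (K : fieldType) (V : lmodType K) (pi : K) (pi0 : pi != 0)
  (P : V -> Prop) (i : int) (x : V) :
  scale_set (pi ^ i) P x -> scale_set (pi ^ (i + 1)) P (pi *: x).
Proof.
case=> y hy ->; exists y => //.
by rewrite scalerA expfzDr // expr1z mulrC.
Qed.

Unset Implicit Arguments.

Theorem theorem1p2p4 (K : fieldType) (V : vectType K) (v : K -> int)
    (hv : is_discrete_valuation v) (pi : K) (hpi : uniformizer v pi)
    (L M : V -> Prop) (hL : is_lattice v L) (hM : is_lattice v M) :
  forall x : V, m_plus pi L M x -> m_minus v pi L M (pi *: x).
Proof.
move=> x hx P hP hS.
have hN1 := vr_N1 hv.
have pi0 : pi != 0 by case: hpi.
have sL := lat_sub hv hL. have sM := lat_sub hv hM.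
have mp_sub : forall y z, m_plus pi L M y -> m_plus pi L M z -> m_plus pi L M (y - z).
  move=> y z hy hz n.
  case: (hy n) => [y1 [z1 [h1 h2 ->]]]. case: (hz n) => [y2 [z2 [h3 h4 ->]]].
  exists (y1 - y2), (z1 - z2); split.
  - by apply: (ss_add sL) => //; apply: (ss_opp sL hN1).
  - by apply: (ss_add sM) => //; apply: (ss_opp sM hN1).
  - by rewrite opprD addrACA.
have base : forall y (a b : int), scale_set (pi ^ a) L y -> scale_set (pi ^ b) M y ->
    -1 <= a + b -> P (pi *: y).
  move=> y a b ha hb hab; apply: hS; exists (a + 1); split; first exact: ss_pi.
  apply: (ss_mono hv hpi sM _ (b + 1)); first lia.
  exact: ss_pi.
have key : forall k : nat, forall y (a b : int), m_plus pi L M y ->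
    scale_set (pi ^ a) L y -> scale_set (pi ^ b) M y -> -1 - k%:Z <= a + b ->
    P (pi *: y).
  elim=> [|k IH] y a b hy ha hb hab.
    by apply: (base y a b ha hb); lia.
  have [hs|hs] := lerP (-1) (a + b); first exact: (base y a b ha hb).
  case: (hy (a + 1)) => [w [z [hw hz e]]].
  have ez : z = y - w by rewrite e addrAC subrr add0r.
  have ew : w = y - z by rewrite e addrK.
  have za : scale_set (pi ^ a) L z.
    rewrite ez; apply: (ss_add sL) => //; apply: (ss_opp sL hN1).
    by apply: (ss_mono hv hpi sL _ (a + 1)) => //; lia.
  have zmp : m_plus pi L M z.
    move=> n; have [hn|hn] := lerP n a.
      exists z, 0; split; [exact: (ss_mono hv hpi sL _ _ hn za) | exact: (ss0 sM _) | by rewrite addr0].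
    exists 0, z; split; [exact: (ss0 sL _) | | by rewrite add0r].
    by apply: (ss_mono hv hpi sM _ (- (a + 1))) => //; lia.
  have Pz : P (pi *: z) by apply: (base z a (- (a + 1))) => //; lia.
  have wb : scale_set (pi ^ b) M w.
    rewrite ew; apply: (ss_add sM) => //; apply: (ss_opp sM hN1).
    by apply: (ss_mono hv hpi sM _ (- (a + 1))) => //; lia.
  have wmp : m_plus pi L M w by rewrite ew; apply: mp_sub.
  have Pw : P (pi *: w) by apply: (IH w (a + 1) b) => //; lia.
  case: hP => _ hD _.
  by rewrite e scalerDr; apply: hD.
have [NL hNL] := lat_abs hv hpi hL x.
have [NM hNM] := lat_abs hv hpi hM x.
have ab : forall (Q : V -> Prop) (N : nat), Q (pi ^+ N *: x) ->
    scale_set (pi ^ (- (N%:Z))) Q x.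
  move=> Q N hQ; exists (pi ^+ N *: x) => //.
  by rewrite scalerA -exprnN mulVf ?scale1r // expf_neq0.
apply: (key (NL + NM)%N x (- (NL%:Z)) (- (NM%:Z))) => //; try exact: ab.
lia.
Qed.
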